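(* Let $s\ge r\ge2$, let $Q$ be an $s$-vertex $r$-graph and let $\mathcal P$ be a $Q$-flat hereditary property of $r$-graphs. Then for every $n\ge s$ and every $H\in\mathcal P_n$, $$\mathcal N(Q,H)\le\pi(Q,\mathcal P)\,\frac{n^s}{s!},$$ and for every $p\ge1$, $$\lambda^{(p)}(Q,H)\le\pi(Q,\mathcal P)\,n^{s-s/p}.$$
   Context: An $r$-graph ($r\ge 2$) is a finite hypergraph all of whose edges have exactly $r$ vertices. For $I\subseteq V(H)$, $H[I]$ denotes the induced subhypergraph on $I$. For an $s$-vertex $r$-graph $Q$ and an $r$-graph $H$, $\mathcal N(Q,H)$ is the number of (not necessarily induced) subgraphs of $H$ isomorphic to $Q$. For an $n$-vertex $r$-graph $H$ with vertex set $[n]$ and $\mathbf x\in\mathbb R^n$, $P_{Q,H}(\mathbf x)=s!\sum_{\{i_1,\dots,i_s\}\in\binom{[n]}{s}}\mathcal N(Q,H[\{i_1,\dots,i_s\}])\,x_{i_1}\cdots x_{i_s}$, and for $p\ge1$, $\lambda^{(p)}(Q,H)=\max_{\|\mathbf x\|_p=1}P_{Q,H}(\mathbf x)$. A hereditary property $\mathcal P$ of $r$-graphs is a family of $r$-graphs closed under isomorphism and under taking induced subgraphs; as a standing assumption, whenever $H\in\mathcal P$, the disjoint union of $H$ with an isolated vertex is also in $\mathcal P$. $\mathcal P_n$ is the set of members of $\mathcal P$ with $n$ vertices. $ex(Q,\mathcal P_n)=\max\{\mathcal N(Q,H):H\in\mathcal P_n\}$ and $\pi(Q,\mathcal P)=\lim_{n\to\infty}ex(Q,\mathcal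 P_n)/\binom ns$ (this limit exists). $\lambda^{(p)}(Q,\mathcal P_n)=\max\{\lambda^{(p)}(Q,H):H\in\mathcal P_n\}$ and $\lambda^{(p)}(Q,\mathcal P)=\lim_{n\to\infty}\lambda^{(p)}(Q,\mathcal P_n)n^{s/p-s}$ (this limit exists). $\mathcal P$ is $Q$-flat if $\lambda^{(1)}(Q,\mathcal P)=\pi(Q,\mathcal P)$. *)

(* Defs.v *)
From HB Require Import structures.
From mathcomp Require Import all_boot all_order all_algebra.
From mathcomp Require Import all_classical all_reals all_analysis.
Set Implicit Arguments. Unset Strict Implicit. Unset Printing Implicit Defensive.
Import Order.TTheory GRing.Theory Num.Theory.
Import numFieldNormedType.Exports.
Local Open Scope ring_scope.

Definition is_rgraph (r n : nat) (E : {set {set 'I_n}}) : bool :=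
  [forall e in E, #|e| == r].

(* Induced subgraph pulled back along an injection f : 'I_m -> 'I_n
   (covers both relabelling by isomorphisms and induced subgraphs). *)
Definition pullback (m n : nat) (f : 'I_m -> 'I_n) (E : {set {set 'I_n}})
  : {set {set 'I_m}} := [set e : {set 'I_m} | f @: e \in E].

(* H plus one isolated vertex (the new vertex is n). *)
Definition add_isolated (n : nat) (E : {set {set 'I_n}}) : {set {set 'I_n.+1}} :=
  (fun e : {set 'I_n} => [set widen_ord (leqnSn n) i | i in e]) @: E.

Definition hereditary (r : nat) (P : forall n : nat, {set {set 'I_n}} -> bool) : Prop :=
  [/\ (forall n (E : {set {set 'I_n}}), P n E -> is_rgraph r E),
      (forall m n (f : 'I_m -> 'I_n), injective f ->
         forall E : {set {set 'I_n}}, P n E -> P m (pullback f E))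
    & (forall n (E : {set {set 'I_n}}), P n E -> P n.+1 (add_isolated E))].

(* Number of subgraphs (V', E') of H[I] (V' ⊆ I, E' ⊆ E) isomorphic to Q. *)
Definition Nsub (s n : nat) (Q : {set {set 'I_s}}) (E : {set {set 'I_n}})
  (I : {set 'I_n}) : nat :=
  #|[set VE : {set 'I_n} * {set {set 'I_n}} |
      [&& VE.1 \subset I, VE.2 \subset E,
          [forall e in VE.2, e \subset VE.1] &
          [exists f : {ffun 'I_s -> 'I_n},
             [&& injectiveb f, f @: [set: 'I_s] == VE.1 &
                 (fun e : {set 'I_s} => [set f i | i in e]) @: Q == VE.2]]]]|.

Definition Ncount (s n : nat) (Q : {set {set 'I_s}}) (E : {set {set 'I_n}}) : nat :=
  Nsub Q E [set: 'I_n].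

Definition PQH (R : realType) (s n : nat) (Q : {set {set 'I_s}})
  (E : {set {set 'I_n}}) (x : 'I_n -> R) : R :=
  (s`!)%:R * \sum_(I : {set 'I_n} | #|I| == s) (Nsub Q E I)%:R * \prod_(i in I) x i.

Definition normp (R : realType) (n : nat) (p : R) (x : 'I_n -> R) : R :=
  powR (\sum_(i < n) powR `|x i| p) p^-1.

(* lambda^(p)(Q,H) = max_{||x||_p = 1} P_{Q,H}(x) (the max exists by compactness) *)
Definition lamH (R : realType) (p : R) (s n : nat) (Q : {set {set 'I_s}})
  (E : {set {set 'I_n}}) : R :=
  sup [set PQH Q E x | x in [set x : 'I_n -> R | normp p x = 1]].

Definition exQP (s : nat) (Q : {set {set 'I_s}})
  (P : forall n : nat, {set {set 'I_n}} -> bool) (n : nat) : nat :=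
  \max_(E : {set {set 'I_n}} | P n E) Ncount Q E.

Definition piQP (R : realType) (s : nat) (Q : {set {set 'I_s}})
  (P : forall n : nat, {set {set 'I_n}} -> bool) : R :=
  limn (fun n : nat => (exQP Q P n)%:R / ('C(n, s))%:R : R).

Definition lamPn (R : realType) (p : R) (s : nat) (Q : {set {set 'I_s}})
  (P : forall n : nat, {set {set 'I_n}} -> bool) (n : nat) : R :=
  \big[Num.max/0]_(E : {set {set 'I_n}} | P n E) lamH p Q E.

Definition lamP (R : realType) (p : R) (s : nat) (Q : {set {set 'I_s}})
  (P : forall n : nat, {set {set 'I_n}} -> bool) : R :=
  limn (fun n : nat => lamPn p Q P n * powR (n%:R) (s%:R / p - s%:R)).

Definition Qflat (R : realType) (s : nat) (Q : {set {set 'I_s}})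
  (P : forall n : nat, {set {set 'I_n}} -> bool) : Prop :=
  lamP 1 Q P = piQP R Q P.

(* Main.v *)
Set Warnings "-notation-overridden,-ambiguous-paths,-notation-incompatible-prefix".
Require Import Defs.
From HB Require Import structures.
From mathcomp Require Import all_boot all_order all_algebra.
From mathcomp Require Import all_classical all_reals all_analysis.
From mathcomp Require Import ring.
Import Order.TTheory GRing.Theory Num.Theory.
Import numFieldNormedType.Exports.
Local Open Scope ring_scope.

Section CombS.


Lemma Nsub_le s n (Q : {set {set 'I_s}}) (E : {set {set 'I_n}}) (I : {set 'I_n}) :
  (0 < s)%N -> #|I| = s -> (Nsub Q E I <= s ^ s)%N.
Proof.
move=> s0 cI.
have [x0 x0I] : exists x0, x0 \in I.
  by apply/finset.set0Pn; rewrite -card_gt0 cI.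
pose F := [set f : {ffun 'I_s -> 'I_n} | f @: [set: 'I_s] \subset I].
pose g := fun f : {ffun 'I_s -> 'I_n} =>
  (f @: [set: 'I_s], (fun e : {set 'I_s} => [set f i | i in e]) @: Q).
rewrite /Nsub.
apply: (@leq_trans #|g @: F|).
  apply: subset_leq_card; apply/fintype.subsetP => -[V W].
  rewrite inE /= => /and4P[VI WE _ /existsP[f /and3P[_ /eqP fV /eqP fW]]].
  apply/imsetP; exists f; last by rewrite /g fV fW.
  by rewrite inE fV.
apply: (leq_trans (leq_imset_card _ _)).
pose h := fun f : {ffun 'I_s -> 'I_n} => [ffun k => enum_rank_in x0I (f k)].
have hinj : {in F &, injective h}.
  move=> f1 f2; rewrite !inE => /fintype.subsetP H1 /fintype.subsetP H2 /ffunP Hh.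
  apply/ffunP => k; have := Hh k; rewrite !ffunE => /(congr1 enum_val).
  rewrite !enum_rankK_in //; [apply: H2 | apply: H1]; apply/imsetP; by exists k.
apply: leq_trans (@leq_card_in _ _ h F hinj) _.
by rewrite card_ffun !card_ord cI.
Qed.

Lemma Ncount_le_sum s n (Q : {set {set 'I_s}}) (E : {set {set 'I_n}}) :
  (Ncount Q E <= \sum_(I : {set 'I_n} | #|I| == s) Nsub Q E I)%N.
Proof.
rewrite /Ncount /Nsub.
set S := [set VE | _].
rewrite -sum1_card (partition_big fst (fun I : {set 'I_n} => #|I| == s)) /=.
  apply: leq_sum => I _.
  rewrite sum1dep_card; apply: subset_leq_card; apply/fintype.subsetP => -[V W].
  rewrite !inE /= => /andP[/and4P[_ -> -> ->] /eqP ->].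
  by rewrite subxx.
move=> [V W]; rewrite inE /= => /and4P[_ _ _ /existsP[f /and3P[fi /eqP <- _]]].
by rewrite card_imset ?cardsT ?card_ord //; apply/injectiveP.
Qed.

Lemma Nsub_emb s n m (Q : {set {set 'I_s}}) (E : {set {set 'I_n}}) (I : {set 'I_n})
  (phi : 'I_n -> 'I_m) :
  injective phi ->
  (Nsub Q E I <= Nsub Q ((fun e : {set 'I_n} => phi @: e) @: E) (phi @: I))%N.
Proof.
move=> iphi; rewrite /Nsub.
pose G := fun VE : {set 'I_n} * {set {set 'I_n}} =>
  (phi @: VE.1, (fun e : {set 'I_n} => phi @: e) @: VE.2).
have iG : injective G.
  move=> [V1 W1] [V2 W2] [/(imset_inj iphi) -> /(imset_inj (imset_inj iphi)) ->] //.
rewrite -(card_imset _ iG); apply: subset_leq_card; apply/fintype.subsetP => _ /imsetP[[V W] + ->].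
rewrite !inE /= => /and4P[VI WE /forall_inP WV /existsP[f /and3P[fi /eqP fV /eqP fW]]].
apply/and4P; split.
- exact: imsetS.
- exact: imsetS.
- apply/forall_inP => _ /imsetP[e eW ->]; apply: imsetS; exact: WV.
- apply/existsP; exists [ffun i => phi (f i)]; apply/and3P; split.
  + apply/injectiveP => i j; rewrite !ffunE => /iphi; exact: (injectiveP _ fi).
  + rewrite -fV -imset_comp; apply/eqP/eq_imset => i; by rewrite ffunE.
  + rewrite -fW -imset_comp; apply/eqP/eq_imset => e /=; rewrite -imset_comp.
    by apply: eq_imset => i; rewrite ffunE.
Qed.

End CombS.


Set Implicit Arguments. Unset Strict Implicit.
Local Open Scope classical_set_scope.
Section R1.
Variable R : realType.

Definition extv n (y : 'I_n -> R) (i : 'I_n.+1) : R :=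
  if insub (val i) is Some j then y j else 0.

Lemma extv_w n (y : 'I_n -> R) i : extv y (widen_ord (leqnSn n) i) = y i.
Proof.
rewrite /extv; case: insubP => [j _ hj|]; last by rewrite /= ltn_ord.
by congr y; apply: val_inj; rewrite hj.
Qed.

Lemma extv_max n (y : 'I_n -> R) : extv y ord_max = 0.
Proof. by rewrite /extv; case: insubP => [j /= |//]; rewrite ltnn. Qed.

Lemma normp1E n (x : 'I_n -> R) : normp 1 x = \sum_i `|x i|.
Proof.
rewrite /normp invr1 powRr1; last by apply: sumr_ge0 => i _; exact: powR_ge0.
by apply: eq_bigr => i _; rewrite powRr1.
Qed.

Lemma PQH_abs s n (Q : {set {set 'I_s}}) (E : {set {set 'I_n}}) (x : 'I_n -> R) :
  PQH Q E x <= PQH Q E (fun i => `|x i|).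
Proof.
rewrite /PQH; apply: ler_wpM2l => //; apply: ler_sum => I _.
apply: ler_wpM2l => //; rewrite -normr_prod; exact: ler_norm.
Qed.

Lemma sum_prod_le n s (y : 'I_n -> R) : (forall i, 0 <= y i) ->
  \sum_(I : {set 'I_n} | #|I| == s) \prod_(i in I) y i <= expR (\sum_i y i).
Proof.
move=> y0.
apply: (@le_trans _ _ (\sum_(I : {set 'I_n}) \prod_(i in I) y i)).
  rewrite [X in _ <= X](bigID (fun I : {set 'I_n} => #|I| == s)) /= lerDl.
  by apply: sumr_ge0 => I _; apply: prodr_ge0 => i _.
have -> : \sum_(I : {set 'I_n}) \prod_(i in I) y i = \prod_i (y i + 1).
  rewrite (@bigA_distr R 0 1 *%R +%R _ y (fun=> 1)).
  by apply: congr_big => // J; rewrite -big_mkcond.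
rewrite expR_sum; apply: ler_prod => i _.
by rewrite addr_ge0 //= addrC expR_ge1Dx.
Qed.

Definition Kb (s : nat) : R := (s`!)%:R * (s ^ s)%:R * expR 1.

Lemma Kb_ge0 s : 0 <= Kb s.
Proof. by rewrite /Kb !mulr_ge0 // expR_ge0. Qed.

Lemma PQH_bound s n (Q : {set {set 'I_s}}) (E : {set {set 'I_n}}) (x : 'I_n -> R) :
  (0 < s)%N -> PQH Q E x <= (s`!)%:R * (s ^ s)%:R * expR (\sum_i `|x i|).
Proof.
move=> s0; apply: le_trans (PQH_abs _ _ _) _.
rewrite /PQH -mulrA; apply: ler_wpM2l => //.
apply: (@le_trans _ _ (\sum_(I : {set 'I_n} | #|I| == s)
                        (s ^ s)%:R * \prod_(i in I) `|x i|)).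
  apply: ler_sum => I /eqP cI; apply: ler_wpM2r.
    by apply: prodr_ge0 => i _.
  by rewrite ler_nat Nsub_le.
rewrite -mulr_sumr; apply: ler_wpM2l => //.
exact: sum_prod_le.
Qed.

Lemma lamH1_bound s n (Q : {set {set 'I_s}}) (E : {set {set 'I_n}}) :
  (0 < s)%N -> lamH 1 Q E <= Kb s.
Proof.
move=> s0; rewrite /lamH.
set S := (X in sup X).
have [ne|e] := pselect (S !=set0).
  apply: ge_sup => // _ [x /= nx <-].
  by apply: le_trans (PQH_bound _ _ _ s0) _; rewrite -normp1E nx.
have -> : S = set0.
  by apply/seteqP; split => // y hy; apply: e; exists y.
by rewrite sup0 Kb_ge0.
Qed.

Lemma lamH1_ge s n (Q : {set {set 'I_s}}) (E : {set {set 'I_n}}) (x : 'I_n -> R) :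
  (0 < s)%N -> normp 1 x = 1 -> PQH Q E x <= lamH 1 Q E.
Proof.
move=> s0 nx; rewrite /lamH; apply: ub_le_sup; last by exists x.
exists (Kb s) => _ [y /= ny <-].
by apply: le_trans (PQH_bound _ _ _ s0) _; rewrite -normp1E ny.
Qed.

Lemma normp1_ext n (y : 'I_n -> R) : normp 1 (extv y) = normp 1 y.
Proof.
rewrite !normp1E big_ord_recr /= extv_max normr0 addr0.
by apply: eq_bigr => i _; rewrite extv_w.
Qed.

Lemma PQH_ext s n (Q : {set {set 'I_s}}) (E : {set {set 'I_n}}) (y : 'I_n -> R) :
  (forall i, 0 <= y i) -> PQH Q E y <= PQH Q (add_isolated E) (extv y).
Proof.
move=> y0; rewrite /PQH; apply: ler_wpM2l => //.
set w := widen_ord (leqnSn n).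
have iw : injective w by move=> i j h; apply: val_inj; exact: (congr1 val h).
pose Im := (fun I : {set 'I_n} => w @: I) @: [set I : {set 'I_n} | #|I| == s]%SET.
rewrite [X in _ <= X](bigID (mem Im)) /=.
rewrite -[X in X <= _]addr0; apply: lerD; last first.
  by apply: sumr_ge0 => I _; apply: mulr_ge0 => //; apply: prodr_ge0 => i _;
     rewrite /extv; case: insub.
rewrite (eq_bigl (mem Im)); last first.
  move=> I' /=; apply/idP/idP => [/andP[] //|hI]; rewrite hI andbT.
  by case/imsetP: hI => I; rewrite inE => /eqP <- ->; rewrite card_imset.
rewrite big_imset /=; last by move=> I1 I2 _ _; apply: imset_inj.
rewrite [X in _ <= X](eq_bigl (fun I : {set 'I_n} => #|I| == s)); last by move=> I; rewrite inE.
apply: ler_sum => I _; apply: ler_pM => //.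
- by apply: prodr_ge0.
- by rewrite ler_nat; apply: Nsub_emb.
rewrite big_imset /=; last by move=> i j _ _; apply: iw.
by rewrite le_eqVlt; apply/orP; left; apply/eqP; apply: eq_bigr => i _; rewrite extv_w.
Qed.

Lemma lamH1_mono s n (Q : {set {set 'I_s}}) (E : {set {set 'I_n}}) :
  (0 < s)%N -> lamH (1:R) Q E = 0 \/ lamH (1:R) Q E <= lamH 1 Q (add_isolated E).
Proof.
move=> s0; rewrite /lamH.
set S := (X in sup X).
have [ne|e] := pselect (S !=set0); last first.
  left; have -> : S = set0.
    by apply/seteqP; split => // y hy; apply: e; exists y.
  by rewrite sup0.
right; apply: ge_sup => // _ [x /= nx <-].
apply: le_trans (PQH_abs _ _ _) _.
apply: le_trans (PQH_ext _ _ _) _ => //.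
apply: lamH1_ge => //.
by rewrite normp1_ext !normp1E -nx normp1E; apply: eq_bigr => i _; rewrite normr_id.
Qed.

End R1.
Local Close Scope classical_set_scope.
Unset Implicit Arguments.


Set Implicit Arguments. Unset Strict Implicit.
Local Open Scope classical_set_scope.

Section R2.
Variable R : realType.

Lemma young_sum n (p : R) (a : 'I_n -> R) : (0 < n)%N -> 1 <= p ->
  (forall i, 0 <= a i) -> \sum_i powR (a i) p = 1 ->
  \sum_i a i <= powR n%:R (1 - p^-1).
Proof.
move=> n0 p1 a0 sp.
have [p1e|p1'] := eqVneq p 1.
  rewrite p1e in sp *; rewrite invr1 subrr powRr0 -sp le_eqVlt; apply/orP; left; apply/eqP.
  by apply: eq_bigr => i _; rewrite powRr1.
have p0 : 0 < p by apply: lt_le_trans p1.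
have p1s : 1 < p by rewrite lt_neqAle eq_sym p1' p1.
have pi1 : p^-1 < 1 by rewrite invf_lt1.
set q := (1 - p^-1)^-1.
have q0 : 0 < q by rewrite invr_gt0 subr_gt0.
have pq : p^-1 + q^-1 = 1 by rewrite /q invrK addrC subrK.
have nR0 : 0 < n%:R :> R by rewrite ltr0n.
set c := powR n%:R p^-1.
have c0 : 0 < c by apply: powR_gt0.
have cp : powR c p = n%:R by rewrite /c -powRrM mulVf ?gt_eqF // powRr1 // ltW.
have key : forall i, a i * c <= powR (a i) p * n%:R / p + q^-1.
  move=> i; have := @conjugate_powR R (a i * c) 1 p q (mulr_ge0 (a0 i) (ltW c0)) ler01 p0 q0 pq.
  by rewrite mulr1 powR1 div1r powRM ?(ltW c0) // cp.
have : (\sum_i a i) * c <= n%:R.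
  rewrite mulr_suml; apply: le_trans (ler_sum _ (fun i _ => key i)) _.
  rewrite big_split /= -mulr_suml -mulr_suml sp sumr_const card_ord.
  have -> : 1 * n%:R / p + q^-1 *+ n = n%:R * (p^-1 + q^-1) by rewrite -mulr_natl; ring.
  by rewrite pq mulr1.
rewrite -ler_pdivlMr // => h; apply: le_trans h _.
rewrite powRB; last by rewrite gt_eqF ?implybT. by rewrite powRr1 ?ler0n.
Qed.

Lemma lamPn_ge0 (p : R) s (Q : {set {set 'I_s}}) (P : forall n : nat, {set {set 'I_n}} -> bool) n : 0 <= lamPn p Q P n.
Proof. exact: bigmax_ge_id. Qed.

Lemma lamPn1_le s (Q : {set {set 'I_s}}) (P : forall n : nat, {set {set 'I_n}} -> bool) n : (0 < s)%N -> lamPn (1:R) Q P n <= Kb R s.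
Proof.
move=> s0; apply: bigmax_le; first exact: Kb_ge0.
by move=> E _; apply: lamH1_bound.
Qed.

Lemma lamH_le_lamPn (p : R) s (Q : {set {set 'I_s}}) (P : forall n : nat, {set {set 'I_n}} -> bool) n E :
  P n E -> lamH p Q E <= lamPn p Q P n.
Proof. by move=> hE; apply: le_bigmax_cond. Qed.

Lemma lamPn1_mono r s (Q : {set {set 'I_s}}) (P : forall n : nat, {set {set 'I_n}} -> bool) n : (0 < s)%N -> hereditary r P ->
  lamPn (1:R) Q P n <= lamPn 1 Q P n.+1.
Proof.
move=> s0 [_ _ hiso]; apply: bigmax_le; first exact: lamPn_ge0.
move=> E hE; have [->|h] := @lamH1_mono R _ _ Q E s0; first exact: lamPn_ge0.
by apply: le_trans h _; apply: lamH_le_lamPn; apply: hiso.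
Qed.

End R2.

Local Close Scope classical_set_scope.
Unset Implicit Arguments.
Set Strict Implicit.
Theorem theorem3p12 (R : realType) (r s : nat) (Q : {set {set 'I_s}})
  (P : forall n : nat, {set {set 'I_n}} -> bool) :
  (2 <= r)%N -> (r <= s)%N -> is_rgraph r Q -> hereditary r P -> Qflat R Q P ->
  forall (n : nat) (H : {set {set 'I_n}}), (s <= n)%N -> P n H ->
    (Ncount Q H)%:R <= piQP R Q P * (n%:R ^+ s) / (s`!)%:R
    /\ (forall p : R, 1 <= p ->
          lamH p Q H <= piQP R Q P * powR (n%:R) (s%:R - s%:R / p)).
Proof.
Local Open Scope classical_set_scope.
move=> r2 rs _ hP hflat n H sn hH.
have s0 : (0 < s)%N by apply: leq_trans rs; apply: leq_trans r2.
have n0 : (0 < n)%N by apply: leq_trans sn.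
pose u := fun k => lamPn (1:R) Q P k.
have nd : nondecreasing_seq u by apply/nondecreasing_seqP => k; apply: lamPn1_mono hP.
have cu : cvgn u.
  apply: cvgP; apply: nondecreasing_cvgn => //.
  by exists (Kb R s) => _ [k _ <-]; apply: lamPn1_le.
have uL : forall k, u k <= limn u by move=> k; apply: nondecreasing_cvgn_le.
have piE : piQP R Q P = limn u.
  rewrite -hflat /lamP; congr (lim (_ @ \oo)); apply: funext => k.
  by rewrite divr1 subrr powRr0 mulr1.
have L0 : 0 <= limn u by apply: le_trans (uL 0%N); apply: lamPn_ge0.
have HL : lamH (1:R) Q H <= limn u.
  by apply: le_trans (uL n); apply: lamH_le_lamPn.
have nR0 : 0 < n%:R :> R by rewrite ltr0n.
rewrite piE; split.
  pose v := fun _ : 'I_n => (n%:R : R)^-1.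
  have nv : normp 1 v = 1.
    rewrite normp1E /v sumr_const card_ord ger0_norm ?invr_ge0 ?ler0n //.
    rewrite (_ : (n%:R : R)^-1 *+ n = (n%:R)^-1 * n%:R); first by rewrite mulVf ?gt_eqF.
    by rewrite mulr_natr.
  have hv := lamH1_ge Q H s0 nv.
  have PE : PQH Q H v = (s`!)%:R *
      (\sum_(I : {set 'I_n} | #|I| == s) Nsub Q H I)%:R * (n%:R^-1) ^+ s.
    rewrite /PQH -mulrA; congr (_ * _); rewrite natr_sum mulr_suml.
    by apply: eq_bigr => I /eqP cI; rewrite /v prodr_const cI.
  have key : (s`!)%:R * (Ncount Q H)%:R * (n%:R^-1) ^+ s <= limn u.
    apply: le_trans HL; apply: le_trans hv; rewrite PE.
    apply: ler_wpM2r; first by rewrite exprn_ge0 // invr_ge0 ler0n.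
    by apply: ler_wpM2l => //; rewrite ler_nat Ncount_le_sum.
  rewrite ler_pdivlMr ?ltr0n ?fact_gt0 //.
  have -> : (Ncount Q H)%:R * (s`!)%:R =
      (s`!)%:R * (Ncount Q H)%:R * (n%:R^-1) ^+ s * n%:R ^+ s :> R.
    by rewrite exprVn mulfVK ?expf_neq0 ?gt_eqF // mulrC.
  by apply: ler_wpM2r => //; rewrite exprn_ge0 // ler0n.
move=> p p1.
have p0 : 0 < p by apply: lt_le_trans p1.
rewrite /lamH; set S := (X in sup X).
have [ne|e] := pselect (S !=set0); last first.
  have -> : S = set0 by apply/seteqP; split => // y hy; apply: e; exists y.
  by rewrite sup0 mulr_ge0 ?powR_ge0.
apply: ge_sup => // _ [x /= nx <-].
pose a := fun i => `|x i|.
pose t := \sum_i a i.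
have sp : \sum_i powR (a i) p = 1.
  move: nx; rewrite /normp => /eqP; rewrite powR_eq1 => /or3P[/eqP h | | ].
  - exact: h.
  - by rewrite ltNge sumr_ge0 // => i _; apply: powR_ge0.
  - by rewrite invr_eq0 gt_eqF.
have t0 : 0 < t.
  have tge : 0 <= t by apply: sumr_ge0 => i _; apply: normr_ge0.
  rewrite lt_neqAle tge andbT; apply/negP => /eqP h.
  have : \sum_i powR (a i) p = 0.
    apply: big1 => i _.
    have -> : a i = 0 by apply: (psumr_eq0P _ (esym h)) => // j _; apply: normr_ge0.
    by rewrite powR0 // gt_eqF.
  by rewrite sp => h01; have := @oner_neq0 R; rewrite h01 eqxx.
have ht : t <= powR n%:R (1 - p^-1).
  by apply: young_sum => // i; apply: normr_ge0.
pose y := fun i => a i / t.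
have ny : normp 1 y = 1.
  rewrite normp1E (eq_bigr (fun i => a i / t)); last first. by move=> i _; rewrite ger0_norm // divr_ge0 ?normr_ge0 ?ltW.
  by rewrite -mulr_suml mulfV ?gt_eqF.
have PA : PQH Q H a = t ^+ s * PQH Q H y.
  rewrite /PQH mulrCA; congr (_ * _); rewrite mulr_sumr; apply: eq_bigr => I /eqP cI.
  rewrite /y big_split /= prodr_const cI mulrCA; congr (_ * _).
  by rewrite mulrC exprVn mulfVK // expf_neq0 // gt_eqF.
apply: le_trans (PQH_abs _ _ _) _.
rewrite -/a PA.
have hy : PQH Q H y <= limn u by apply: le_trans HL; apply: lamH1_ge.
apply: le_trans (ler_wpM2l (exprn_ge0 _ (ltW t0)) hy) _.
rewrite mulrC; apply: ler_wpM2l => //.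
have -> : s%:R - s%:R / p = (1 - p^-1) * s%:R :> R by ring.
rewrite powRrM powR_mulrn ?powR_ge0 //.
have := @lerXn2r R s t (powR n%:R (1 - p^-1)); apply; rewrite ?nnegrE ?powR_ge0 ?(ltW t0) //.
Qed.
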